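(* For each integer $d\ge 1$ let $\Delta^{d-1}=\{p\in\mathbb{R}^d_{\ge 0}:\sum_{f=1}^d p_f=1\}$ be the standard simplex, and let \[ \Psi^{(d)}:\mathbb{R}_{\ge 0}^d\setminus\{0\}\to \Delta^{d-1} \] be a map (a ''local share rule''). Assume the family $\{\Psi^{(d)}\}_{d\ge 1}$ satisfies refinement consistency: for every $d\ge1$, every $a=(a_1,\dots,a_d)\in\mathbb{R}^d_{\ge0}\setminus\{0\}$, every index $k\in\{1,\dots,d\}$ and every $r,q\ge 0$ with $r+q=a_k$, the refined vector \[ a^{[k\to(r,q)]}=(a_1,\dots,a_{k-1},r,q,a_{k+1},\dots,a_d)\in\mathbb{R}^{d+1}_{\ge0} \] satisfies, when $a_k>0$, \[ \Psi^{(d+1)}\!\left(a^{[k\to(r,q)]}\right)=\left(\Psi_1^{(d)}(a),\dots,\Psi_{k-1}^{(d)}(a),\tfrac{r}{a_k}\Psi_k^{(d)}(a),\tfrac{q}{a_k}\Psi_k^{(d)}(a),\Psi_{k+1}^{(d)}(a),\dots,\Psi_d^{(d)}(a)\right), \] and, when $a_k=0$, $\Psi^{(d+1)}(a^{[k\to(0,0)]})$ agrees with $\Psi^{(d)}(a)$ on all non-refined coordinates (in the same order) and assigns the value $0$ to the two refined coordinates. Then for every $d\ge1$, every $a\in\mathbb{R}^d_{\ge0}\setminus\{0\}$ and every $f\in\{1,\dots,d\}$, \[ \Psi^{(d)}_f(a)=\frac{a_f}{\sum_{g=1}^d a_g}. \]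
   Context: The requirement that each $\Psi^{(d)}$ takes values in the simplex (nonnegative entries summing to one) is called ''budgeting''. Entries $a_f$ are interpreted as nonnegative local efforts of factors. *)

(* Defs.v *)
From mathcomp Require Import all_boot all_order all_algebra.
From mathcomp Require Import reals.
Set Implicit Arguments. Unset Strict Implicit. Unset Printing Implicit Defensive.
Import Order.TTheory GRing.Theory Num.Theory.
Local Open Scope ring_scope.

(* Vectors in R^d are functions 'I_d -> R; coordinate f (1-based in the paper)
   is the ordinal f-1. *)

Definition nonneg_nonzero (R : realType) (d : nat) (a : 'I_d -> R) : Prop :=
  (forall i, 0 <= a i) /\ (exists i, a i != 0).

Definition in_simplex (R : realType) (d : nat) (p : 'I_d -> R) : Prop :=
  (forall i, 0 <= p i) /\ \sum_(i < d) p i = 1.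

(* nat-indexed access to a vector (0 outside the range; only used in range) *)
Definition getv (R : realType) (d : nat) (a : 'I_d -> R) (i : nat) : R :=
  match insub i with Some i' => a i' | None => 0 end.

(* a^{[k -> (r,q)]} = (a_0,...,a_{k-1}, r, q, a_{k+1}, ..., a_{d-1}) in R^{d+1}
   (0-based indices). *)
Definition refine (R : realType) (d : nat) (a : 'I_d -> R) (k : 'I_d) (r q : R)
  : 'I_d.+1 -> R :=
  fun j => if (j < k)%N then getv a j
           else if (j == k :> nat) then r
           else if (j == k.+1 :> nat) then q
           else getv a j.-1.

(* Main.v *)
Require Import Defs.
From mathcomp Require Import all_boot all_order all_algebra.
From mathcomp Require Import reals.
From Stdlib Require Import FunctionalExtensionality.
Import Order.TTheory GRing.Theory Num.Theory.
Local Open Scope ring_scope.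

Lemma getv_inord (R : realType) d (g : 'I_d.+1 -> R) (i : nat) :
  (i < d.+1)%N -> getv g i = g (inord i).
Proof.
move=> hi; rewrite /getv; case: insubP => [i' _ hv|]; last by rewrite hi.
by congr g; apply: val_inj; rewrite /= inordK // -hv.
Qed.

Lemma refine0 (R : realType) d (g : 'I_d.+1 -> R) r q (j : 'I_d.+2) :
  refine g ord0 r q j =
  if (j == 0%N :> nat) then r else if (j == 1%N :> nat) then q else g (inord j.-1).
Proof.
rewrite /refine /=.
case: (j == 0%N :> nat) => //; case: (j == 1%N :> nat) => //.
apply: getv_inord; case: j => [[|j] hj] //=.
Qed.

Lemma nz_sum (R : realType) d (a : 'I_d -> R) :
  (forall i, 0 <= a i) -> ((exists i, a i != 0) <-> \sum_(i < d) a i != 0).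
Proof.
move=> h; split.
- move=> [i hi]; apply/negP => /eqP hs.
  by move: hi; rewrite (psumr_eq0P (fun i _ => h i) hs isT) eqxx.
- move=> hs; case: (pickP (fun i => a i != 0)) => [i hi|hn]; first by exists i.
  move: hs; rewrite big1 ?eqxx // => i _; by move: (hn i) => /negbFE/eqP.
Qed.

Theorem theorem4p1 (R : realType)
  (Psi : forall d : nat, ('I_d -> R) -> ('I_d -> R))
  (* budgeting: Psi^(d) maps R^d_{>=0} \ {0} into the simplex *)
  (Hbudget : forall (d : nat) (a : 'I_d -> R), (0 < d)%N ->
      nonneg_nonzero a -> in_simplex (Psi d a))
  (* refinement consistency, case a_k > 0 *)
  (Hrefpos : forall (d : nat) (a : 'I_d -> R) (k : 'I_d) (r q : R), (0 < d)%N ->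
      nonneg_nonzero a -> 0 <= r -> 0 <= q -> r + q = a k -> 0 < a k ->
      forall j : 'I_d.+1,
        Psi d.+1 (refine a k r q) j =
        refine (Psi d a) k (r / a k * Psi d a k) (q / a k * Psi d a k) j)
  (* refinement consistency, case a_k = 0 *)
  (Hrefzero : forall (d : nat) (a : 'I_d -> R) (k : 'I_d), (0 < d)%N ->
      nonneg_nonzero a -> a k = 0 ->
      forall j : 'I_d.+1,
        Psi d.+1 (refine a k 0 0) j = refine (Psi d a) k 0 0 j) :
  forall (d : nat) (a : 'I_d -> R) (f : 'I_d), (0 < d)%N ->
    nonneg_nonzero a -> Psi d a f = a f / \sum_(g < d) a g.
Proof.
move=> [//|n]; elim: n => [|n IH] a f _ Ha.
  have [_ hs] := Hbudget 1%N a isT Ha.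
  have -> : f = ord0 by apply: val_inj; case: f => [[]].
  move: hs; rewrite big_ord1 => ->.
  rewrite big_ord1; case: Ha => _ [i]; have -> : i = ord0 by apply: val_inj; case: i => [[]].
  by move=> h; rewrite divff.
case: (Ha) => Hnn Hnz.
pose b : 'I_n.+1 -> R := fun i => if (i == 0%N :> nat) then a ord0 + a (inord 1)
                                  else getv a i.+1.
have hb : forall j : 'I_n.+2, (j != 0%N :> nat) -> (j != 1%N :> nat) ->
    b (inord j.-1) = a j.
  move=> [[|[|j]] hj] //= _ _; rewrite /b inordK //= ?getv_inord //.
  by congr a; apply: val_inj; rewrite /= inordK.
have hbnn : forall i, 0 <= b i.
  move=> i; rewrite /b; case: ifP => _; first by rewrite addr_ge0.
  by rewrite /getv; case: insubP.
have hsum : \sum_(i < n.+1) b i = \sum_(i < n.+2) a i.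
  rewrite big_ord_recl [in RHS]big_ord_recl [in RHS]big_ord_recl addrA.
  congr (_ + _).
    rewrite /b /=; congr (_ + _); congr a; apply: val_inj; by rewrite /= inordK.
  apply: eq_bigr => i _; rewrite /b /= getv_inord; last by rewrite !ltnS.
  congr a; apply: val_inj; rewrite /= inordK // /bump leq0n add1n !ltnS ltn_ord //.
have Hb : nonneg_nonzero b.
  split => //; apply/nz_sum => //; rewrite hsum; exact/nz_sum.
have hS : \sum_(i < n.+2) a i != 0 by exact/nz_sum.
have IHb : forall i, Psi n.+1 b i = b i / \sum_(i < n.+2) a i.
  by move=> i; rewrite IH // hsum.
have hrefa : forall r q, r = a ord0 -> q = a (inord 1) -> refine b ord0 r q = a.
  move=> r q -> ->; apply: functional_extensionality => j; rewrite refine0.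
  case: eqP => [h0|/eqP h0].
    by congr a; apply: val_inj; rewrite /= h0.
  case: eqP => [h1|/eqP h1]; last by rewrite hb.
  by congr a; apply: val_inj; rewrite /= h1 inordK.
have hb0 : b ord0 = a ord0 + a (inord 1) by [].
have [hpos|hz] : 0 < b ord0 \/ b ord0 = 0.
  by have := hbnn ord0; rewrite le0r => /orP [/eqP ->|->]; [right|left].
- have := Hrefpos n.+1 b ord0 (a ord0) (a (inord 1)) isT Hb (Hnn _) (Hnn _) hb0 hpos f.
  rewrite hrefa // => ->; rewrite refine0 !IHb.
  have hne : b ord0 != 0 by rewrite gt_eqF.
  case: eqP => [h0|/eqP h0].
    have -> : f = ord0 by apply: val_inj; rewrite /= h0.
    by rewrite mulrA divfK.
  case: eqP => [h1|/eqP h1]; last by rewrite hb.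
  have -> : f = inord 1 by apply: val_inj; rewrite /= h1 inordK.
  by rewrite mulrA divfK.
- have [h0 h1] : a ord0 = 0 /\ a (inord 1) = 0.
    move: hz; rewrite hb0 => /eqP; rewrite paddr_eq0 ?Hnn // => /andP [/eqP -> /eqP ->].
    by [].
  have := Hrefzero n.+1 b ord0 isT Hb hz f.
  rewrite hrefa // => ->; rewrite refine0 IHb.
  case: eqP => [e0|/eqP e0].
    have -> : f = ord0 by apply: val_inj; rewrite /= e0.
    by rewrite h0 mul0r.
  case: eqP => [e1|/eqP e1]; last by rewrite hb.
  have -> : f = inord 1 by apply: val_inj; rewrite /= e1 inordK.
  by rewrite h1 mul0r.
Qed.
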